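(* Let $f\not\equiv0$ be given by a Taylor series $f(z)=\sum_{k\ge0}a_kz^k$ with radius of convergence $R\in(0,\infty]$, and let $a_{n_0}$ be its first non-zero coefficient. Then for every $n>n_0$, $\kappa(n,r)\to\infty$ as $r\to0$; but $\kappa(n_0,r)\to1$ as $r\to 0$.
   Context: For $0<r<R$, $M_1(r)=\frac{1}{2\pi}\int_0^{2\pi}|f(re^{i\theta})|\,d\theta$ and $\kappa(n,r)=\dfrac{M_1(r)}{|a_n|r^n}$, with the convention $\kappa(n,r)=+\infty$ if $a_n=0$. *)

(* Defs.v *)
From Stdlib Require Import Reals.
From Coquelicot Require Import Coquelicot.
Open Scope R_scope.

Fixpoint Cpow (z : C) (k : nat) : C :=
  match k with O => RtoC 1 | S k' => Cmult z (Cpow z k') end.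

(* radius of convergence of sum a_k z^k (depends only on |a_k|) *)
Definition radius (a : nat -> C) : Rbar := CV_radius (fun k => Cmod (a k)).

Definition fps (a : nat -> C) (z : C) : C :=
  (Series (fun k => Re (Cmult (a k) (Cpow z k))),
   Series (fun k => Im (Cmult (a k) (Cpow z k)))).

Definition cis (t : R) : C := (cos t, sin t).

Definition M1 (a : nat -> C) (r : R) : R :=
  / (2 * PI) * RInt (fun t => Cmod (fps a (Cmult (RtoC r) (cis t)))) 0 (2 * PI).

Definition kappa (a : nat -> C) (n : nat) (r : R) : Rbar :=
  match Req_EM_T (Cmod (a n)) 0 with
  | left _ => p_infty
  | right _ => Finite (M1 a r / (Cmod (a n) * r ^ n))
  end.

Definition tends_pinfty_at_0 (g : R -> Rbar) : Prop :=
  forall M : R, exists d : R, 0 < d /\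
    forall r, 0 < r < d -> Rbar_lt (Finite M) (g r).

Definition tends_to_at_0 (g : R -> Rbar) (l : R) : Prop :=
  forall eps : R, 0 < eps -> exists d : R, 0 < d /\
    forall r, 0 < r < d ->
      Rbar_lt (Finite (l - eps)) (g r) /\ Rbar_lt (g r) (Finite (l + eps)).

(* Main.v *)
Require Import Defs.
From Stdlib Require Import Reals Lra Psatz.
From Coquelicot Require Import Coquelicot.
Open Scope R_scope.

Lemma im_le_Cmod (c : C) : Rabs (Im c) <= Cmod c.
Proof.
  destruct c as [x y]; unfold Cmod, Im; simpl.
  rewrite <- sqrt_Rsqr_abs. apply sqrt_le_1_alt. unfold Rsqr. nra.
Qed.

Lemma Cmod_le_sum (c : C) : Cmod c <= Rabs (Re c) + Rabs (Im c).
Proof.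
  destruct c as [x y]; unfold Cmod, Re, Im; simpl.
  assert (H3 := Rabs_pos y). assert (H5 := Rabs_pos x).
  rewrite <- (sqrt_Rsqr (Rabs x + Rabs y)) by lra. apply sqrt_le_1_alt.
  unfold Rsqr. assert (H4 : y * (y * 1) = Rabs y * Rabs y) by (rewrite <- Rabs_mult, Rabs_right; nra).
  assert (H6 : x * (x * 1) = Rabs x * Rabs x) by (rewrite <- Rabs_mult, Rabs_right; nra).
  nra.
Qed.

Lemma Cmod_cis t : Cmod (cis t) = 1.
Proof.
  unfold Cmod, cis; simpl. rewrite <- sqrt_1. f_equal.
  assert (H := sin2_cos2 t). unfold Rsqr in H. rewrite sqrt_1. lra.
Qed.

Lemma Cmod_Cpow z k : Cmod (Defs.Cpow z k) = Cmod z ^ k.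
Proof.
  induction k; simpl. - apply Cmod_1. - rewrite Cmod_mult, IHk; ring.
Qed.

Lemma Cmod_zt r t : 0 <= r -> Cmod (Cmult (RtoC r) (cis t)) = r.
Proof. intros. rewrite Cmod_mult, Cmod_R, Cmod_cis, Rabs_pos_eq; lra. Qed.

Definition ccont (g : R -> C) :=
  continuity (fun t => fst (g t)) /\ continuity (fun t => snd (g t)).

Lemma ccont_mult g h : ccont g -> ccont h -> ccont (fun t => Cmult (g t) (h t)).
Proof.
  intros [g1 g2] [h1 h2]; unfold Cmult; simpl; split.
  - apply continuity_minus; apply continuity_mult; auto.
  - apply continuity_plus; apply continuity_mult; auto.
Qed.

Lemma ccont_const c : ccont (fun _ => c).
Proof. split; apply continuity_const; intros ??; reflexivity. Qed.

Lemma ccont_pow g k : ccont g -> ccont (fun t => Defs.Cpow (g t) k).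
Proof.
  intros Hg; induction k; simpl.
  - apply ccont_const.
  - apply ccont_mult; auto.
Qed.

Lemma ccont_zt r : ccont (fun t => Cmult (RtoC r) (cis t)).
Proof.
  apply ccont_mult. apply ccont_const. split; simpl.
  apply continuity_cos. apply continuity_sin.
Qed.

Lemma sum_zero (f : nat -> R) m : (forall k, (k <= m)%nat -> f k = 0) -> sum_f_R0 f m = 0.
Proof.
  induction m; intros H; simpl. - apply H; lia.
  - rewrite IHm by (intros; apply H; lia). rewrite (H (S m)) by lia. lra.
Qed.

Lemma sum_first (f : nat -> R) n0 : (forall k, (k < n0)%nat -> f k = 0) -> sum_f_R0 f n0 = f n0.
Proof.
  destruct n0; intros H; simpl. reflexivity.
  rewrite sum_zero; [lra|]. intros; apply H; lia.
Qed.

Lemma exists_rho (a : nat -> C) : Rbar_lt (Finite 0) (radius a) ->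
  exists rho, 0 < rho <= 1 /\ Rbar_lt (Finite (Rabs rho)) (radius a).
Proof.
  intros H. destruct (radius a) as [R0| |] eqn:E; simpl in H.
  - exists (Rmin 1 (R0/2)). assert (0 < Rmin 1 (R0/2)) by (apply Rmin_pos; lra).
    split. split; [lra| apply Rmin_l]. rewrite Rabs_pos_eq by lra. simpl.
    assert (Rmin 1 (R0/2) <= R0/2) by apply Rmin_r. lra.
  - exists 1. split. lra. simpl. auto.
  - contradiction.
Qed.

Definition zt r t := Cmult (RtoC r) (cis t).

Lemma term_bound (a : nat -> C) r t k : 0 <= r ->
  Rabs (Re (Cmult (a k) (Defs.Cpow (zt r t) k))) <= Cmod (a k) * r ^ k /\
  Rabs (Im (Cmult (a k) (Defs.Cpow (zt r t) k))) <= Cmod (a k) * r ^ k.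
Proof.
  intros Hr. assert (E : Cmod (Cmult (a k) (Defs.Cpow (zt r t) k)) = Cmod (a k) * r ^ k).
  { rewrite Cmod_mult, Cmod_Cpow. unfold zt. rewrite Cmod_zt; auto. }
  rewrite <- E. split. apply re_le_Cmod. apply im_le_Cmod.
Qed.

Lemma ex_u (a : nat -> C) rho : 0 < rho -> Rbar_lt (Finite (Rabs rho)) (radius a) ->
  ex_series (fun k => Cmod (a k) * rho ^ k).
Proof.
  intros Hp H. assert (H' := CV_radius_inside _ _ H).
  unfold ex_pseries in H'. eapply ex_series_ext; [|exact H'].
  intros k; simpl. rewrite pow_n_pow. unfold scal; simpl; unfold mult; simpl. ring.
Qed.

Lemma ex_terms (a : nat -> C) rho r t : 0 <= r <= rho ->
  ex_series (fun k => Cmod (a k) * rho ^ k) ->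
  ex_series (fun k => Re (Cmult (a k) (Defs.Cpow (zt r t) k))) /\
  ex_series (fun k => Im (Cmult (a k) (Defs.Cpow (zt r t) k))).
Proof.
  intros Hr Hu.
  assert (B : forall k, Cmod (a k) * r ^ k <= Cmod (a k) * rho ^ k).
  { intros k; apply Rmult_le_compat_l; [apply Cmod_ge_0| apply pow_incr; lra]. }
  split; apply (@ex_series_le R_AbsRing R_CompleteNormedModule _ (fun k => Cmod (a k) * rho ^ k)); try exact Hu;
  intros k; change norm with Rabs; simpl.
  - eapply Rle_trans; [apply (term_bound a r t k); lra| apply B].
  - eapply Rle_trans; [apply (term_bound a r t k); lra| apply B].
Qed.

Lemma tail_bound (a : nat -> C) (n0 : nat) rho r (f : nat -> R) :
  0 < rho -> 0 <= r <= rho ->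
  ex_series (fun k => Cmod (a k) * rho ^ k) ->
  ex_series f -> (forall k, (k < n0)%nat -> f k = 0) ->
  (forall k, Rabs (f k) <= Cmod (a k) * r ^ k) ->
  Rabs (Series f - f n0) <= r ^ (S n0) * Series (fun k => Cmod (a (S n0 + k)%nat) * rho ^ k).
Proof.
  intros Hrho Hr Hu Hf Hz Hb.
  rewrite (Series_incr_n f (S n0)) by (auto; lia). simpl pred. rewrite sum_first by auto.
  replace (f n0 + Series (fun k => f (S n0 + k)%nat) - f n0) with (Series (fun k => f (S n0 + k)%nat)) by ring.
  set (v := fun k => Cmod (a (S n0 + k)%nat) * rho ^ k).
  assert (Hv : ex_series v).
  { apply (proj1 (ex_series_incr_n _ (S n0))) in Hu.
    apply (ex_series_scal_l (/ rho ^ (S n0))) in Hu.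
    eapply ex_series_ext; [|exact Hu]. intros k. unfold v. simpl scal. unfold scal; simpl; unfold mult; simpl.
    rewrite pow_add. field. split; [apply pow_nonzero|]; lra. }
  assert (Hb2 : forall k, Rabs (f (S n0 + k)%nat) <= r ^ (S n0) * v k).
  { intros k. eapply Rle_trans. apply Hb. unfold v. rewrite pow_add.
    assert (0 <= r ^ S n0) by (apply pow_le; lra).
    assert (r ^ k <= rho ^ k) by (apply pow_incr; lra).
    assert (0 <= r ^ k) by (apply pow_le; lra).
    assert (0 <= Cmod (a (S n0 + k)%nat)) by apply Cmod_ge_0.
    replace (Cmod (a (S n0 + k)%nat) * (r ^ S n0 * r ^ k)) with ((Cmod (a (S n0 + k)%nat) * r ^ S n0) * r ^ k) by ring.
    replace (r ^ S n0 * (Cmod (a (S n0 + k)%nat) * rho ^ k)) with ((Cmod (a (S n0 + k)%nat) * r ^ S n0) * rho ^ k) by ring.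
    apply Rmult_le_compat_l; auto. apply Rmult_le_pos; auto. }
  assert (Hv2 : ex_series (fun k => r ^ (S n0) * v k)) by exact (ex_series_scal_l _ v Hv).
  assert (Ha : ex_series (fun k => Rabs (f (S n0 + k)%nat))).
  { apply (@ex_series_le R_AbsRing R_CompleteNormedModule _ (fun k => r ^ (S n0) * v k)); [|exact Hv2].
    intros k. change norm with Rabs. simpl. rewrite Rabs_Rabsolu. apply Hb2. }
  eapply Rle_trans. apply Series_Rabs. exact Ha.
  rewrite <- Series_scal_l. apply Series_le; [|exact Hv2].
  intros k; split; [apply Rabs_pos| apply Hb2].
Qed.

Lemma rev_tri (F G : C) : Rabs (Cmod F - Cmod G) <= Cmod (F - G).
Proof.
  assert (H1 : Cmod F <= Cmod (F - G) + Cmod G).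
  { replace F with ((F - G) + G)%C at 1 by ring. apply Cmod_triangle. }
  assert (H2 : Cmod G <= Cmod (F - G) + Cmod F).
  { replace G with (- (F - G) + F)%C at 1 by ring. rewrite <- (Cmod_opp (F - G)). apply Cmod_triangle. }
  apply Rabs_le; lra.
Qed.

Lemma pointwise (a : nat -> C) (n0 : nat) rho r t :
  0 < rho -> 0 <= r <= rho ->
  ex_series (fun k => Cmod (a k) * rho ^ k) ->
  (forall k, (k < n0)%nat -> a k = RtoC 0) ->
  Rabs (Cmod (fps a (zt r t)) - Cmod (a n0) * r ^ n0)
    <= 2 * (r ^ (S n0) * Series (fun k => Cmod (a (S n0 + k)%nat) * rho ^ k)).
Proof.
  intros Hrho Hr Hu Hz.
  set (w := Cmult (a n0) (Defs.Cpow (zt r t) n0)).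
  assert (Ew : Cmod w = Cmod (a n0) * r ^ n0).
  { unfold w. rewrite Cmod_mult, Cmod_Cpow. unfold zt. rewrite Cmod_zt; auto; lra. }
  rewrite <- Ew. eapply Rle_trans. apply rev_tri.
  eapply Rle_trans. apply Cmod_le_sum.
  destruct (ex_terms a rho r t Hr Hu) as [E1 E2].
  assert (Z1 : forall k, (k < n0)%nat -> Re (Cmult (a k) (Defs.Cpow (zt r t) k)) = 0).
  { intros k Hk. rewrite Hz by auto. rewrite Cmult_0_l. reflexivity. }
  assert (Z2 : forall k, (k < n0)%nat -> Im (Cmult (a k) (Defs.Cpow (zt r t) k)) = 0).
  { intros k Hk. rewrite Hz by auto. rewrite Cmult_0_l. reflexivity. }
  assert (T1 := tail_bound a n0 rho r _ Hrho Hr Hu E1 Z1 (fun k => proj1 (term_bound a r t k (proj1 Hr)))).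
  assert (T2 := tail_bound a n0 rho r _ Hrho Hr Hu E2 Z2 (fun k => proj2 (term_bound a r t k (proj1 Hr)))).
  assert (R1 : Re (fps a (zt r t) - w) = Series (fun k => Re (Cmult (a k) (Defs.Cpow (zt r t) k))) - Re (Cmult (a n0) (Defs.Cpow (zt r t) n0))).
  { unfold w, fps. simpl. lra. }
  assert (R2 : Im (fps a (zt r t) - w) = Series (fun k => Im (Cmult (a k) (Defs.Cpow (zt r t) k))) - Im (Cmult (a n0) (Defs.Cpow (zt r t) n0))).
  { unfold w, fps. simpl. lra. }
  rewrite R1, R2. lra.
Qed.

Lemma series_cont (a : nat -> C) rho r (P : C -> R) :
  0 < rho -> 0 <= r <= rho ->
  ex_series (fun k => Cmod (a k) * rho ^ k) ->
  (forall c, Rabs (P c) <= Cmod c) ->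
  (forall k, continuity (fun t => P (Cmult (a k) (Defs.Cpow (zt r t) k)))) ->
  continuity (fun t => Series (fun k => P (Cmult (a k) (Defs.Cpow (zt r t) k)))).
Proof.
  intros Hrho Hr Hu HP Hc.
  set (fn := fun k t => P (Cmult (a k) (Defs.Cpow (zt r t) k))).
  set (An := fun k => Cmod (a k) * rho ^ k).
  assert (HA : ex_series (fun k => Rabs (An k))).
  { eapply ex_series_ext; [|exact Hu]. intros k. unfold An. rewrite Rabs_pos_eq; auto.
    apply Rmult_le_pos; [apply Cmod_ge_0| apply pow_le; lra]. }
  assert (Hcv : Un_cv (fun n => sum_f_R0 (fun k => Rabs (An k)) n) (Series (fun k => Rabs (An k)))).
  { apply is_series_Reals. apply Series_correct. exact HA. }
  assert (Hbd : forall n y, Rabs (fn n y) <= An n).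
  { intros n y. unfold fn, An. eapply Rle_trans. apply HP.
    rewrite Cmod_mult, Cmod_Cpow. unfold zt. rewrite Cmod_zt by lra.
    apply Rmult_le_compat_l; [apply Cmod_ge_0| apply pow_incr; lra]. }
  assert (X : CVN_R fn).
  { intros rr. exists An. exists (Series (fun k => Rabs (An k))). split. exact Hcv.
    intros n y _. apply Hbd. }
  assert (C := SFL_continuity fn (CVN_R_CVS fn X) X Hc).
  intros t. apply continuity_pt_ext with (f := SFL fn (CVN_R_CVS fn X)); [|apply C].
  intros y. unfold SFL. destruct (CVN_R_CVS fn X y) as [l Hl].
  symmetry. apply is_series_unique. apply is_series_Reals. exact Hl.
Qed.

Lemma ex_RInt_M (a : nat -> C) rho r :
  0 < rho -> 0 <= r <= rho ->
  ex_series (fun k => Cmod (a k) * rho ^ k) ->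
  ex_RInt (fun t => Cmod (fps a (zt r t))) 0 (2 * PI).
Proof.
  intros Hrho Hr Hu.
  assert (C1 : continuity (fun t => Series (fun k => Re (Cmult (a k) (Defs.Cpow (zt r t) k))))).
  { apply (series_cont a rho r Re); auto. apply re_le_Cmod.
    intros k. destruct (ccont_mult _ _ (ccont_const (a k)) (ccont_pow _ k (ccont_zt r))) as [A B]. exact A. }
  assert (C2 : continuity (fun t => Series (fun k => Im (Cmult (a k) (Defs.Cpow (zt r t) k))))).
  { apply (series_cont a rho r Im); auto. apply im_le_Cmod.
    intros k. destruct (ccont_mult _ _ (ccont_const (a k)) (ccont_pow _ k (ccont_zt r))) as [A B]. exact B. }
  apply (@ex_RInt_continuous R_CompleteNormedModule). intros z _.
  apply continuity_pt_filterlim.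
  set (g := fun t => Series (fun k => Re (Cmult (a k) (Defs.Cpow (zt r t) k))) ^ 2 + Series (fun k => Im (Cmult (a k) (Defs.Cpow (zt r t) k))) ^ 2).
  apply continuity_pt_ext with (f := comp sqrt g).
  { intros y. unfold comp, g, Cmod, fps. simpl. reflexivity. }
  apply continuity_pt_comp.
  - unfold g. apply continuity_plus; simpl; apply continuity_mult; auto; apply continuity_mult; auto; apply continuity_const; intros ??; reflexivity.
  - apply continuity_pt_sqrt. unfold g. nra.
Qed.

Lemma M1_bound (a : nat -> C) (n0 : nat) rho r :
  0 < rho -> 0 <= r <= rho ->
  ex_series (fun k => Cmod (a k) * rho ^ k) ->
  (forall k, (k < n0)%nat -> a k = RtoC 0) ->
  Rabs (M1 a r - Cmod (a n0) * r ^ n0)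
    <= 2 * (r ^ (S n0) * Series (fun k => Cmod (a (S n0 + k)%nat) * rho ^ k)).
Proof.
  intros Hrho Hr Hu Hz.
  set (e := 2 * (r ^ (S n0) * Series (fun k => Cmod (a (S n0 + k)%nat) * rho ^ k))).
  set (c := Cmod (a n0) * r ^ n0).
  assert (Hp := fun t => pointwise a n0 rho r t Hrho Hr Hu Hz). fold e c in Hp.
  assert (Hi := ex_RInt_M a rho r Hrho Hr Hu).
  assert (PI2 : 0 < 2 * PI) by (assert (H := PI_RGT_0); lra).
  assert (L : RInt (fun _ => c - e) 0 (2 * PI) <= RInt (fun t => Cmod (fps a (zt r t))) 0 (2 * PI)).
  { apply RInt_le; auto. lra. apply ex_RInt_const. intros x _. specialize (Hp x).
    apply Rabs_le_between' in Hp. lra. }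
  assert (U : RInt (fun t => Cmod (fps a (zt r t))) 0 (2 * PI) <= RInt (fun _ => c + e) 0 (2 * PI)).
  { apply RInt_le; auto. lra. apply ex_RInt_const. intros x _. specialize (Hp x).
    apply Rabs_le_between' in Hp. lra. }
  rewrite !RInt_const in L, U. unfold scal in L, U; simpl in L, U; unfold mult in L, U; simpl in L, U.
  unfold M1. change (fun t => Cmod (fps a (Cmult (RtoC r) (cis t)))) with (fun t => Cmod (fps a (zt r t))).
  set (I := RInt (fun t => Cmod (fps a (zt r t))) 0 (2 * PI)) in *.
  assert (E1 : / (2 * PI) * I >= c - e).
  { apply Rle_ge. apply Rmult_le_reg_l with (2 * PI); auto. rewrite <- Rmult_assoc, Rinv_r by lra. lra. }
  assert (E2 : / (2 * PI) * I <= c + e).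
  { apply Rmult_le_reg_l with (2 * PI); auto. rewrite <- Rmult_assoc, Rinv_r by lra. lra. }
  apply Rabs_le; lra.
Qed.

Theorem theorem4p3 (a : nat -> C) (n0 : nat) :
  Rbar_lt (Finite 0) (radius a) ->
  a n0 <> RtoC 0 ->
  (forall k, (k < n0)%nat -> a k = RtoC 0) ->
  (forall n, (n0 < n)%nat -> tends_pinfty_at_0 (kappa a n)) /\
  tends_to_at_0 (kappa a n0) 1.
Proof.
  intros Hrad Hn0 Hz.
  destruct (exists_rho a Hrad) as [rho [[Hrho Hrho1] Hrr]].
  assert (Hu := ex_u a rho Hrho Hrr).
  set (V := Series (fun k => Cmod (a (S n0 + k)%nat) * rho ^ k)).
  set (K := Rabs (2 * V) + 1).
  assert (HK : 0 < K) by (unfold K; assert (H := Rabs_pos (2 * V)); lra).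
  set (A := Cmod (a n0)).
  assert (HA : 0 < A) by (apply Cmod_gt_0; exact Hn0).
  assert (Hb : forall r, 0 < r <= rho -> Rabs (M1 a r - A * r ^ n0) <= K * r * r ^ n0).
  { intros r Hr. eapply Rle_trans. apply (M1_bound a n0 rho r Hrho); auto; lra.
    fold V. simpl. assert (0 <= r * r ^ n0) by (apply Rmult_le_pos; [lra| apply pow_le; lra]).
    assert (H2 := Rle_abs (2 * V)). unfold K. nra. }
  split.
  - intros n Hn M. unfold kappa. destruct (Req_EM_T (Cmod (a n)) 0) as [E|E].
    { exists 1. split. lra. intros; simpl; auto. }
    set (B := Cmod (a n)).
    assert (HB : 0 < B) by (assert (H := Cmod_ge_0 (a n)); unfold B; lra).
    set (d := Rmin rho (Rmin (A / (2 * K)) (A / (2 * B * (Rabs M + 1))))).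
    assert (HM := Rabs_pos M).
    assert (Hd1 : d <= rho) by apply Rmin_l.
    assert (Hd2 : d <= A / (2 * K)) by (eapply Rle_trans; [apply Rmin_r| apply Rmin_l]).
    assert (Hd3 : d <= A / (2 * B * (Rabs M + 1))) by (eapply Rle_trans; [apply Rmin_r| apply Rmin_r]).
    exists d. split.
    { apply Rmin_pos. lra. apply Rmin_pos; apply Rdiv_lt_0_compat; try nra. }
    intros r Hr. simpl.
    assert (Hr1 : r <= rho) by lra.
    specialize (Hb r (conj (proj1 Hr) Hr1)).
    set (s := r ^ n0) in *. assert (Hs : 0 < s) by (apply pow_lt; lra).
    destruct (Nat.le_exists_sub (S n0) n Hn) as [m [Em _]].
    assert (Hrn : r ^ n = s * (r * r ^ m)).
    { rewrite Em. replace (m + S n0)%nat with (n0 + S m)%nat by lia. rewrite pow_add. reflexivity. }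
    assert (Hrm : r ^ m <= 1) by (rewrite <- (pow1 m); apply pow_incr; lra).
    assert (Hrm0 : 0 <= r ^ m) by (apply pow_le; lra).
    assert (HKr : K * r <= A / 2).
    { assert (r <= A / (2 * K)) by lra. apply Rmult_le_compat_l with (r := K) in H; [|lra].
      replace (K * (A / (2 * K))) with (A / 2) in H by (field; lra). exact H. }
    assert (HMr : (Rabs M + 1) * B * r <= A / 2).
    { assert (r <= A / (2 * B * (Rabs M + 1))) by lra.
      apply Rmult_le_compat_l with (r := (Rabs M + 1) * B) in H; [|nra].
      replace ((Rabs M + 1) * B * (A / (2 * B * (Rabs M + 1)))) with (A / 2) in H by (field; lra). exact H. }
    apply Rabs_le_between' in Hb.
    assert (K * r * s <= A / 2 * s) by (apply Rmult_le_compat_r; lra).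
    assert (Hlow : A * s / 2 <= M1 a r).
    lra.
    assert (Hpos : 0 < B * r ^ n) by (apply Rmult_lt_0_compat; [lra| apply pow_lt; lra]).
    apply Rlt_div_r; [lra|].
    rewrite Hrn. assert (M <= Rabs M) by apply Rle_abs.
    assert (Hx : M * (B * (s * (r * r ^ m))) <= Rabs M * B * s * r).
    { assert (0 <= B * s * r) by (apply Rmult_le_pos; nra).
      assert (Rabs M * (r * r ^ m) <= Rabs M * r) by (apply Rmult_le_compat_l; nra).
      assert (M * (B * (s * (r * r ^ m))) <= Rabs M * (B * (s * (r * r ^ m)))).
      { apply Rmult_le_compat_r; auto. apply Rmult_le_pos; [lra|]. apply Rmult_le_pos; [lra|]. nra. }
      nra. }
    assert (Rabs M * B * s * r < A * s / 2).
    { assert (Rabs M * B * r < A / 2) by nra. nra. }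
    lra.
  - intros eps Heps. unfold kappa. destruct (Req_EM_T (Cmod (a n0)) 0) as [E|E].
    { exfalso. fold A in E. lra. }
    fold A.
    set (d := Rmin rho (eps * A / (2 * K))).
    exists d. split.
    { apply Rmin_pos. lra. apply Rdiv_lt_0_compat; nra. }
    intros r Hr.
    assert (Hd1 : d <= rho) by apply Rmin_l.
    assert (Hd2 : d <= eps * A / (2 * K)) by apply Rmin_r.
    specialize (Hb r (conj (proj1 Hr) (Rle_trans _ _ _ (Rlt_le _ _ (proj2 Hr)) Hd1))).
    set (s := r ^ n0) in *. assert (Hs : 0 < s) by (apply pow_lt; lra).
    assert (HKr : K * r <= eps * A / 2).
    { assert (r <= eps * A / (2 * K)) by lra. apply Rmult_le_compat_l with (r := K) in H; [|lra].
      replace (K * (eps * A / (2 * K))) with (eps * A / 2) in H by (field; lra). exact H. }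
    set (q := M1 a r / (A * s)).
    assert (Eq : M1 a r = q * (A * s)) by (unfold q; field; split; lra).
    rewrite Eq in Hb. apply Rabs_le_between' in Hb.
    assert (Hq1 : (q - 1) * A * s <= eps * A * s / 2) by nra.
    assert (Hq2 : - (eps * A * s / 2) <= (q - 1) * A * s) by nra.
    assert (HAs : 0 < A * s) by nra.
    assert (q - 1 <= eps / 2).
    { apply Rmult_le_reg_r with (A * s); auto. nra. }
    assert (- (eps / 2) <= q - 1).
    { apply Rmult_le_reg_r with (A * s); auto. nra. }
    simpl. split; lra.
Qed.
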